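(* For every $x\in X\setminus A$, the group $A\cap x^{-1}Ax$ has order not divisible by $q$; and for every $y\in X\setminus B$, the group $B\cap y^{-1}By$ has order not divisible by $p$.
   Context: Let $p$ and $q$ be distinct odd primes. Let $m$ be the smallest positive integer such that $p$ divides $|\mathrm{Sp}(2m,q)|$, and $n$ the smallest positive integer such that $q$ divides $|\mathrm{Sp}(2n,p)|$. Let $Q$ be an extraspecial $q$-group of order $q^{2m+1}$ and exponent $q$, and let $A = Q\rtimes\langle \alpha\rangle$ where $\alpha$ has order $p$, acts trivially on $Z(Q)$ and faithfully on $Q/Z(Q)$. Let $P$ be an extraspecial $p$-group of order $p^{2n+1}$ and exponent $p$, and let $B = P\rtimes\langle\beta\rangle$ where $\beta$ has order $q$, acts trivially on $Z(P)$ and faithfully on $P/Z(P)$. Then $C_A = Z(Q)\times\langle\alpha\rangle$ is a cyclic self-normalizing (nilpotent) subgroup of $A$ of order $pq$, and $C_B = Z(P)\times\langle \beta\rangle$ is a cyclic self-normalizing subgroup of $B$ of order $pq$. Let $X = A *_C B$ be the free product of $A$ and $B$ amalgamated along an isomorphism $C_A\to C_B$ (which necessarily maps $\langle\alpha\rangle$ onto $Z(P)$ and $Z(Q)$ onto $\langle\beta\rangle$); regard $A$, $B$ as subgroups of $X$ with $A\cap B = C = Z(P)\times Z(Q)$. *)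

(* Defs.v *)
From mathcomp Require Import all_boot all_fingroup all_solvable.
Set Implicit Arguments. Unset Strict Implicit. Unset Printing Implicit Defensive.
Local Open Scope group_scope.

(* Order of the symplectic group Sp(2n, q):  q^(n^2) * prod_{i=1}^n (q^(2i) - 1). *)
Definition sp_order (n q : nat) : nat :=
  (q ^ (n ^ 2) * \prod_(1 <= i < n.+1) (q ^ (2 * i) - 1))%N.

Definition least_sp_index (p q n : nat) : Prop :=
  (0 < n)%N /\ (p %| sp_order n q)%N /\
  (forall k, (0 < k)%N -> (k < n)%N -> ~~ (p %| sp_order k q)%N).

Definition is_group (G : Type) (mul : G -> G -> G) (inv : G -> G) (one : G) : Prop :=
  (forall x y z, mul x (mul y z) = mul (mul x y) z) /\
  (forall x, mul one x = x) /\
  (forall x, mul (inv x) x = one).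

Definition hom_on (gT : finGroupType) (D : {set gT}) (G : Type)
  (mul : G -> G -> G) (f : gT -> G) : Prop :=
  forall a b, a \in D -> b \in D -> f (a * b) = mul (f a) (f b).

(* G = Q x| <alpha>, with Q extraspecial of order r^(2n+1) and exponent r,
   alpha of order s acting trivially on Z(Q) and faithfully on Q/Z(Q). *)
Definition ext_semidirect (gT : finGroupType) (r s n : nat)
  (G Q : {group gT}) (alpha : gT) : Prop :=
  extraspecial Q /\ #|Q| = (r ^ (2 * n + 1))%N /\ exponent Q = r /\
      #[alpha] = s /\ Q ><| <[alpha]> = G /\
      alpha \in 'C('Z(Q)) /\
      (forall y, y \in <[alpha]> ->
         (forall x, x \in Q -> [~ x, y] \in 'Z(Q)) -> y = 1).

(* (X, iA, iB) is the free product of A and B amalgamated along the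
   isomorphism phi : CA -> CB, given by the universal property. *)
Definition is_amalgam (gA gB : finGroupType) (A : {group gA}) (B : {group gB})
  (CA : {group gA}) (phi : gA -> gB)
  (X : Type) (mulX : X -> X -> X) (invX : X -> X) (oneX : X)
  (iA : gA -> X) (iB : gB -> X) : Prop :=
  is_group mulX invX oneX /\
      hom_on A mulX iA /\ hom_on B mulX iB /\
      {in A &, injective iA} /\ {in B &, injective iB} /\
      (forall c, c \in CA -> iA c = iB (phi c)) /\
      (forall (G : Type) (mulG : G -> G -> G) (invG : G -> G) (oneG : G),
         is_group mulG invG oneG ->
         forall (fA : gA -> G) (fB : gB -> G),
           hom_on A mulG fA -> hom_on B mulG fB ->
           (forall c, c \in CA -> fA c = fB (phi c)) ->
           exists f : X -> G,
             [/\ (forall x y, f (mulX x y) = mulG (f x) (f y)),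
                 (forall a, a \in A -> f (iA a) = fA a),
                 (forall b, b \in B -> f (iB b) = fB b) &
                 (forall g : X -> G,
                    (forall x y, g (mulX x y) = mulG (g x) (g y)) ->
                    (forall a, a \in A -> g (iA a) = fA a) ->
                    (forall b, b \in B -> g (iB b) = fB b) ->
                    forall x, g x = f x)]).

(* Main.v *)
Require Import Defs.
From mathcomp Require Import all_boot all_fingroup all_solvable.
From mathcomp Require Import zify.
From Stdlib Require Import Lia ClassicalEpsilon FunctionalExtensionality ProofIrrelevance.
Set Implicit Arguments. Unset Strict Implicit. Unset Printing Implicit Defensive.
Local Open Scope group_scope.

Record pperm (T : Type) := PPerm {
  pf : T -> T; pg : T -> T;
  pfg : forall x, pf (pg x) = x; pgf : forall x, pg (pf x) = x }.

Lemma pperm_ext T (u v : pperm T) : (forall x, pf u x = pf v x) -> u = v.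
Proof.
case: u v => f g fg gf [f' g' fg' gf'] /= E.
have Ef : f = f' by apply: functional_extensionality.
subst f'.
have Eg : g = g'.
  apply: functional_extensionality => x.
  by rewrite -{1}(fg' x) gf.
subst g'.
by rewrite (proof_irrelevance _ fg fg') (proof_irrelevance _ gf gf').
Qed.

Definition pmul T (u v : pperm T) : pperm T.
refine (@PPerm T (fun x => pf u (pf v x)) (fun x => pg v (pg u x)) _ _).
- by move=> x; rewrite pfg pfg.
- by move=> x; rewrite pgf pgf.
Defined.

Definition pinv T (u : pperm T) : pperm T :=
  @PPerm T (pg u) (pf u) (pgf u) (pfg u).

Definition pone T : pperm T := @PPerm T id id (fun _ => erefl) (fun _ => erefl).

Lemma pperm_group T : is_group (@pmul T) (@pinv T) (@pone T).
Proof.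
split; [|split].
- by move=> x y z; apply: pperm_ext.
- by move=> x; apply: pperm_ext.
- by move=> x; apply: pperm_ext => y /=; rewrite pgf.
Qed.

Section GroupX.
Variables (X : Type) (mulX : X -> X -> X) (invX : X -> X) (oneX : X).
Hypothesis gX : is_group mulX invX oneX.

Lemma gX_assoc x y z : mulX x (mulX y z) = mulX (mulX x y) z.
Proof. by case: gX. Qed.
Lemma gX_1l x : mulX oneX x = x.
Proof. by case: gX => _ []. Qed.
Lemma gX_Vl x : mulX (invX x) x = oneX.
Proof. by case: gX => _ []. Qed.
Lemma gX_cancel_l x y z : mulX x y = mulX x z -> y = z.
Proof.
move=> E; rewrite -(gX_1l y) -(gX_1l z) -(gX_Vl x) -!gX_assoc E //.
Qed.
Lemma gX_Vr x : mulX x (invX x) = oneX.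
Proof.
rewrite -(gX_1l (mulX x (invX x))) -{1}(gX_Vl (invX x)).
rewrite -gX_assoc (gX_assoc (invX x)) gX_Vl gX_1l gX_Vl //.
Qed.
Lemma gX_1r x : mulX x oneX = x.
Proof. by rewrite -(gX_Vl x) gX_assoc gX_Vr gX_1l. Qed.
Lemma gX_mulKV x y : mulX (invX x) (mulX x y) = y.
Proof. by rewrite gX_assoc gX_Vl gX_1l. Qed.
Lemma gX_mulK x y : mulX x (mulX (invX x) y) = y.
Proof. by rewrite gX_assoc gX_Vr gX_1l. Qed.
Lemma gX_cancel_r x y z : mulX y x = mulX z x -> y = z.
Proof.
move=> E; rewrite -(gX_1r y) -(gX_1r z) -(gX_Vr x) !gX_assoc E //.
Qed.
Lemma gX_idem x : mulX x x = x -> x = oneX.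
Proof. by move=> E; apply: (@gX_cancel_l x); rewrite E gX_1r. Qed.
End GroupX.


Section Repr.
Variables (gT : finGroupType) (A C : {group gT}).
Hypothesis sCA : C \subset A.

Lemma repr_memA y : y \in A -> repr (C :* y) \in A.
Proof.
move=> yA; have := mem_repr_rcoset C y; rewrite mem_rcoset => H.
by rewrite -(mulgKV y (repr _)) groupM // (subsetP sCA).
Qed.
Lemma repr_mulV y : y * (repr (C :* y))^-1 \in C.
Proof.
have := mem_repr_rcoset C y; rewrite mem_rcoset => H.
by have := groupVr H; rewrite invMg invgK.
Qed.
Lemma repr_in y : (repr (C :* y) \in C) = (y \in C).
Proof.
have H := repr_mulV y.
apply/idP/idP => Hy.
  by rewrite -(mulgKV (repr (C :* y)) y) groupM.
have: (y * (repr (C :* y))^-1)^-1 * y \in C by rewrite groupM ?groupV.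
by rewrite invMg invgK mulgKV.
Qed.
Lemma repr_repr y : repr (C :* repr (C :* y)) = repr (C :* y).
Proof. by rewrite rcoset_repr. Qed.
Lemma repr_Cmul c y : c \in C -> repr (C :* (c * y)) = repr (C :* y).
Proof. by move=> cC; rewrite rcosetM rcoset_id. Qed.
Lemma repr_C y : y \in C -> repr (C :* y) = 1.
Proof. by move=> yC; rewrite rcoset_id // repr_group. Qed.
End Repr.

Section Amalg.
Variables (gA gB : finGroupType) (A : {group gA}) (B : {group gB})
  (C : {group gA}) (phi : {morphism C >-> gB}).
Hypotheses (injphi : 'injm phi) (sCA : C \subset A) (sDB : phi @* C \subset B).

Local Notation D := (phi @* C)%G.
Local Notation psi := (invm injphi).

Definition word := (gA * seq (gA + gB))%type.

Definition letA (t : gA) := [&& t \in A, t \notin C & repr (C :* t) == t].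
Definition letB (s : gB) := [&& s \in B, s \notin D & repr (D :* s) == s].
Definition notA (l : seq (gA + gB)) := if l is inl _ :: _ then false else true.
Definition notB (l : seq (gA + gB)) := if l is inr _ :: _ then false else true.
Fixpoint vl (l : seq (gA + gB)) : bool :=
  match l with
  | [::] => true
  | inl t :: l' => [&& letA t, notA l' & vl l']
  | inr s :: l' => [&& letB s, notB l' & vl l']
  end.
Definition valid (w : word) := (w.1 \in C) && vl w.2.

Definition normA (y : gA) (rest : seq (gA + gB)) : word :=
  if y \in C then (y, rest)
  else (y * (repr (C :* y))^-1, inl (repr (C :* y)) :: rest).
Definition normB (y : gB) (rest : seq (gA + gB)) : word :=
  if y \in D then (psi y, rest)
  else (psi (y * (repr (D :* y))^-1), inr (repr (D :* y)) :: rest).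

Definition actA (a : gA) (w : word) : word :=
  match w.2 with
  | inl t :: l' => normA (a * w.1 * t) l'
  | _ => normA (a * w.1) w.2
  end.
Definition actB (b : gB) (w : word) : word :=
  match w.2 with
  | inr s :: l' => normB (b * phi w.1 * s) l'
  | _ => normB (b * phi w.1) w.2
  end.

Lemma psiC y : y \in D -> psi y \in C.
Proof. by case/morphimP => c cd cC ->; rewrite invmE. Qed.
Lemma phiD c : c \in C -> phi c \in D.
Proof. by move=> cC; rewrite mem_morphim. Qed.

Lemma normA_valid y rest : y \in A -> vl rest -> notA rest -> valid (normA y rest).
Proof.
move=> yA vr nr; rewrite /normA /valid; case: ifP => yC //=; first by rewrite yC.
rewrite repr_mulV /letA repr_memA // repr_in // yC repr_repr ?eqxx //=.
by rewrite nr vr.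
Qed.
Lemma normB_valid y rest : y \in B -> vl rest -> notB rest -> valid (normB y rest).
Proof.
move=> yB vr nr; rewrite /normB /valid; case: ifP => yD //=.
  by rewrite vr psiC.
rewrite /letB repr_memA // ?repr_in // ?yD ?repr_repr ?eqxx //= ?nr ?vr //.
by rewrite psiC // repr_mulV.
Qed.

Lemma cA c : c \in C -> c \in A.
Proof. exact: (subsetP sCA). Qed.
Lemma pB c : c \in C -> phi c \in B.
Proof. by move=> cC; rewrite (subsetP sDB) // phiD. Qed.

Lemma actA_valid a w : a \in A -> valid w -> valid (actA a w).
Proof.
case: w => c l aA /andP [/= cC vlw]; rewrite /actA /=.
have acA : a * c \in A by rewrite groupM // cA.
case: l vlw => [|x l'] /=; last case: x => [t|s] /=.
- by move=> _; apply: normA_valid.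
- case/and3P; rewrite /letA => /and3P [tA _ _] nl vl'.
  by apply: normA_valid => //; apply: groupM.
- by move=> H; apply: normA_valid.
Qed.
Lemma actB_valid b w : b \in B -> valid w -> valid (actB b w).
Proof.
case: w => c l bB /andP [/= cC vlw]; rewrite /actB /=.
have bcB : b * phi c \in B by rewrite groupM // pB.
case: l vlw => [|x l'] /=; last case: x => [t|s] /=.
- by move=> _; apply: normB_valid.
- by move=> H; apply: normB_valid.
- case/and3P; rewrite /letB => /and3P [sB _ _] nl vl'.
  by apply: normB_valid => //; apply: groupM.
Qed.

Lemma actA_normA a y rest : notA rest -> actA a (normA y rest) = normA (a * y) rest.
Proof.
move=> nr; rewrite /normA; case: ifP => yC; rewrite /actA /=.
  by case: rest nr => [|[t|s] l] //.
by rewrite /normA -mulgA mulgKV.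
Qed.
Lemma actB_normB b y rest : notB rest -> y \in B -> actB b (normB y rest) = normB (b * y) rest.
Proof.
move=> nr yB; rewrite /normB; case: ifP => yD; rewrite /actB /=.
  by rewrite invmK //; case: rest nr => [|[t|s] l] //.
rewrite invmK; last by apply: repr_mulV.
by rewrite /normB -mulgA mulgKV.
Qed.

Lemma actA_mul a1 a2 w : valid w -> actA a1 (actA a2 w) = actA (a1 * a2) w.
Proof.
case: w => c l /andP [/= cC vlw]; rewrite {2 3}/actA /=.
case: l vlw => [|x l'] /=; last case: x => [t|s] /=.
- by move=> _; rewrite actA_normA // !mulgA.
- by case/and3P => _ nl _; rewrite actA_normA // !mulgA.
- by move=> _; rewrite actA_normA // !mulgA.
Qed.
Lemma actB_mul b1 b2 w : b2 \in B -> valid w -> actB b1 (actB b2 w) = actB (b1 * b2) w.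
Proof.
case: w => c l b2B /andP [/= cC vlw]; rewrite {2 3}/actB /=.
have pc := pB cC.
case: l vlw => [|x l'] /=; last case: x => [t|s] /=.
- by move=> _; rewrite actB_normB // ?groupM // !mulgA.
- by move=> _; rewrite actB_normB // ?groupM // !mulgA.
- case/and3P; rewrite /letB => /and3P [sB _ _] nl _.
  by rewrite actB_normB // ?groupM // !mulgA.
Qed.

Lemma actA_1 w : valid w -> actA 1 w = w.
Proof.
case: w => c l /andP [/= cC vlw]; rewrite /actA /= mul1g.
case: l vlw => [|x l'] /=; last case: x => [t|s] /=.
- by move=> _; rewrite /normA cC.
- case/and3P; rewrite /letA => /and3P [tA tC /eqP rt] nl _.
  rewrite /normA; case: ifP => [|_].
    by move=> ctC; case/negP: tC; rewrite -(mulKg c t) groupM ?groupV.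
  by rewrite repr_Cmul // rt mulgK.
- by move=> _; rewrite /normA cC.
Qed.
Lemma actB_1 w : valid w -> actB 1 w = w.
Proof.
case: w => c l /andP [/= cC vlw]; rewrite /actB /= mul1g.
have pc := phiD cC.
case: l vlw => [|x l'] /=; last case: x => [t|s] /=.
- by move=> _; rewrite /normB pc invmE.
- by move=> _; rewrite /normB pc invmE.
- case/and3P; rewrite /letB => /and3P [sB sD /eqP rs] nl _.
  rewrite /normB; case: ifP => [|_].
    by move=> ctC; case/negP: sD; rewrite -(mulKg (phi c) s) groupM ?groupV.
  by rewrite repr_Cmul // rs mulgK invmE.
Qed.

Lemma actAB c0 w : c0 \in C -> valid w -> actA c0 w = actB (phi c0) w.
Proof.
case: w => c l c0C /andP [/= cC vlw]; rewrite /actA /actB /=.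
have pc := phiD cC; have pc0 := phiD c0C.
have cc : c0 * c \in C by rewrite groupM.
have pcc : phi c0 * phi c \in D by rewrite groupM.
have Ecc : psi (phi c0 * phi c) = c0 * c by rewrite -morphM // invmE.
case: l vlw => [|x l'] /=; last case: x => [t|s] /=.
- by move=> _; rewrite /normA /normB cc pcc Ecc.
- case/and3P; rewrite /letA => /and3P [tA tC /eqP rt] nl _.
  rewrite /normA /normB pcc Ecc.
  case: ifP => [|_].
    by move=> ctC; case/negP: tC; rewrite -(mulKg (c0 * c) t) groupM ?groupV.
  by rewrite repr_Cmul // rt mulgK.
- case/and3P; rewrite /letB => /and3P [sB sD /eqP rs] nl _.
  rewrite /normA /normB cc.
  case: ifP => [|_].
    move=> ctC; case/negP: sD.
    by rewrite -(mulKg (phi c0 * phi c) s) groupM ?groupV.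
  by rewrite repr_Cmul // rs mulgK Ecc.
Qed.

Definition Om := {w : word | valid w}.
Lemma valid_w0 : valid (1, [::]). Proof. by rewrite /valid /= group1. Qed.
Definition w0 : Om := exist _ (1, [::]) valid_w0.

Definition actAo (a : gA) (w : Om) : Om :=
  insubd w (if a \in A then actA a (val w) else val w).
Definition actBo (b : gB) (w : Om) : Om :=
  insubd w (if b \in B then actB b (val w) else val w).

Lemma val_actAo a w : a \in A -> val (actAo a w) = actA a (val w).
Proof. by move=> aA; rewrite /actAo aA insubdK //; apply: actA_valid => //; exact: valP. Qed.
Lemma val_actBo b w : b \in B -> val (actBo b w) = actB b (val w).
Proof. by move=> bB; rewrite /actBo bB insubdK //; apply: actB_valid => //; exact: valP. Qed.
Lemma actAo_out a w : a \notin A -> actAo a w = w.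
Proof. by move/negbTE=> aA; rewrite /actAo aA valKd. Qed.
Lemma actBo_out b w : b \notin B -> actBo b w = w.
Proof. by move/negbTE=> bB; rewrite /actBo bB valKd. Qed.

Lemma actAoK a w : actAo a (actAo a^-1 w) = w.
Proof.
case aA: (a \in A); last by rewrite !actAo_out ?groupV ?aA.
apply: val_inj; rewrite !val_actAo ?groupV // actA_mul ?(valP w) // mulgV.
exact: actA_1 (valP w).
Qed.
Lemma actBoK b w : actBo b (actBo b^-1 w) = w.
Proof.
case bB: (b \in B); last by rewrite !actBo_out ?groupV ?bB.
apply: val_inj; rewrite !val_actBo ?groupV // actB_mul ?(valP w) ?groupV // mulgV.
exact: actB_1 (valP w).
Qed.

Lemma actAoK' a w : actAo a^-1 (actAo a w) = w.
Proof. by have := actAoK a^-1 w; rewrite invgK. Qed.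
Lemma actBoK' b w : actBo b^-1 (actBo b w) = w.
Proof. by have := actBoK b^-1 w; rewrite invgK. Qed.
Definition fA (a : gA) : pperm Om := PPerm (actAoK a) (actAoK' a).
Definition fB (b : gB) : pperm Om := PPerm (actBoK b) (actBoK' b).

Lemma fA_hom : hom_on A (@pmul Om) fA.
Proof.
move=> a b aA bA; apply: pperm_ext => w /=; apply: val_inj.
by rewrite !val_actAo ?groupM // actA_mul // (valP w).
Qed.
Lemma fB_hom : hom_on B (@pmul Om) fB.
Proof.
move=> a b aA bA; apply: pperm_ext => w /=; apply: val_inj.
by rewrite !val_actBo ?groupM // actB_mul // (valP w).
Qed.
Lemma fAB c : c \in C -> fA c = fB (phi c).
Proof.
move=> cC; apply: pperm_ext => w /=; apply: val_inj.
by rewrite val_actAo ?cA // val_actBo ?pB // actAB // (valP w).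
Qed.

Variables (X : Type) (mulX : X -> X -> X) (invX : X -> X) (oneX : X)
  (iA : gA -> X) (iB : gB -> X).
Hypothesis am : is_amalgam A B C phi mulX invX oneX iA iB.

Lemma gX : is_group mulX invX oneX. Proof. by case: am. Qed.
Lemma iA_hom : hom_on A mulX iA. Proof. by case: am => _ []. Qed.
Lemma iB_hom : hom_on B mulX iB. Proof. by case: am => _ [] _ []. Qed.
Lemma iA_inj : {in A &, injective iA}. Proof. by case: am => _ [] _ [] _ []. Qed.
Lemma iB_inj : {in B &, injective iB}. Proof. by case: am => _ [] _ [] _ [] _ []. Qed.
Lemma iAB c : c \in C -> iA c = iB (phi c). Proof. by case: am => _ [] _ [] _ [] _ [] _ [] H _; apply: H. Qed.

Lemma iA1 : iA 1 = oneX.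
Proof. by apply: (gX_idem gX); rewrite -iA_hom ?mulg1. Qed.
Lemma iB1 : iB 1 = oneX.
Proof. by apply: (gX_idem gX); rewrite -iB_hom ?mulg1. Qed.
Lemma iAV a : a \in A -> iA a^-1 = invX (iA a).
Proof.
move=> aA; apply: (gX_cancel_r gX (x := iA a)).
by rewrite -iA_hom ?groupV // mulVg iA1 (gX_Vl gX).
Qed.
Lemma iBV a : a \in B -> iB a^-1 = invX (iB a).
Proof.
move=> aA; apply: (gX_cancel_r gX (x := iB a)).
by rewrite -iB_hom ?groupV // mulVg iB1 (gX_Vl gX).
Qed.

Definition f_univ := (fun (G : Type) (mulG : G -> G -> G) (invG : G -> G) (oneG : G) => True).

Lemma exists_theta : exists f : X -> pperm Om,
  (forall x y, f (mulX x y) = pmul (f x) (f y)) /\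
  (forall a, a \in A -> f (iA a) = fA a) /\ (forall b, b \in B -> f (iB b) = fB b).
Proof.
case: am => _ [] _ [] _ [] _ [] _ [] _ U.
have [f [H1 H2 H3 _]] := U _ _ _ _ (@pperm_group Om) fA fB fA_hom fB_hom fAB.
by exists f.
Qed.

Variable th : X -> pperm Om.
Hypotheses (thM : forall x y, th (mulX x y) = pmul (th x) (th y))
  (thA : forall a, a \in A -> th (iA a) = fA a)
  (thB : forall b, b \in B -> th (iB b) = fB b).

Definition tho (x : X) : Om := pf (th x) w0.
Lemma th1 : th oneX = @pone Om.
Proof. by apply: (gX_idem (@pperm_group Om)); rewrite -thM (gX_1l gX). Qed.
Lemma thoM x y : tho (mulX x y) = pf (th x) (tho y).
Proof. by rewrite /tho thM. Qed.
Lemma tho1 : tho oneX = w0. Proof. by rewrite /tho th1. Qed.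
Lemma thoA a y : a \in A -> val (tho (mulX (iA a) y)) = actA a (val (tho y)).
Proof. by move=> aA; rewrite thoM thA //= val_actAo. Qed.
Lemma thoB b y : b \in B -> val (tho (mulX (iB b) y)) = actB b (val (tho y)).
Proof. by move=> bB; rewrite thoM thB //= val_actBo. Qed.

Fixpoint evl (l : seq (gA + gB)) : X :=
  match l with
  | [::] => oneX
  | inl t :: l' => mulX (iA t) (evl l')
  | inr s :: l' => mulX (iB s) (evl l')
  end.
Definition ev (w : word) : X := mulX (iA w.1) (evl w.2).

Lemma tho_evl l : vl l -> val (tho (evl l)) = (1, l).
Proof.
elim: l => [|[t|s] l IH] /=; first by rewrite tho1.
- case/and3P; rewrite /letA => /and3P [tA tC /eqP rt] nl vl'.
  rewrite thoA // IH // /actA /=.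
  have -> : (match l with inl t0 :: l' => normA (t * 1 * t0) l' | _ => normA (t * 1) l end) = normA t l.
    by case: l nl {IH vl'} => [|[u|u] l] //=; rewrite mulg1.
  by rewrite /normA (negbTE tC) rt mulgV.
- case/and3P; rewrite /letB => /and3P [sB sD /eqP rs] nl vl'.
  rewrite thoB // IH // /actB /= morph1 mulg1.
  have -> : (match l with inr t0 :: l' => normB (s * t0) l' | _ => normB s l end) = normB s l.
    by case: l nl {IH vl'} => [|[u|u] l] //=.
  by rewrite /normB (negbTE sD) rs mulgV morph1.
Qed.

Lemma actA_C1 c l : c \in C -> vl l -> actA c (1, l) = (c, l).
Proof.
move=> cC; rewrite /actA /=; case: l => [|[t|s] l] /=.
- by rewrite mulg1 /normA cC.
- case/and3P; rewrite /letA => /and3P [tA tC /eqP rt] _ _.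
  rewrite mulg1 /normA; case: ifP => [ctC|_].
    by case/negP: tC; rewrite -(mulKg c t) groupM ?groupV.
  by rewrite repr_Cmul // rt mulgK.
- by rewrite mulg1 /normA cC.
Qed.

Lemma tho_ev w : valid w -> val (tho (ev w)) = w.
Proof.
case: w => c l /andP [/= cC vlw]; rewrite /ev /= thoA ?cA // tho_evl //.
exact: actA_C1.
Qed.

Lemma iAM a b : a \in A -> b \in A -> iA (a * b) = mulX (iA a) (iA b).
Proof. exact: iA_hom. Qed.
Lemma iBM a b : a \in B -> b \in B -> iB (a * b) = mulX (iB a) (iB b).
Proof. exact: iB_hom. Qed.

Lemma ev_normA y rest : y \in A -> ev (normA y rest) = mulX (iA y) (evl rest).
Proof.
move=> yA; rewrite /normA; case: ifP => yC //=.
rewrite /ev /= (gX_assoc gX) -iAM ?(cA (repr_mulV _ _)) ?repr_memA // mulgKV //.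
Qed.
Lemma ev_normB y rest : y \in B -> ev (normB y rest) = mulX (iB y) (evl rest).
Proof.
move=> yB; rewrite /normB /ev; case: ifP => yD /=.
  by rewrite iAB ?psiC // invmK.
have H := repr_mulV D y.
rewrite iAB ?psiC // invmK // (gX_assoc gX) -iBM ?mulgKV //.
  by rewrite (subsetP sDB).
exact: repr_memA.
Qed.

Lemma ev_actA a w : a \in A -> valid w -> ev (actA a w) = mulX (iA a) (ev w).
Proof.
case: w => c l aA /andP [/= cC vlw]; rewrite /actA /=.
have acA : a * c \in A by rewrite groupM // cA.
case: l vlw => [|x l'] /=; last case: x => [t|s] /=.
- by move=> _; rewrite ev_normA // /ev /= iAM // ?cA // -(gX_assoc gX).
- case/and3P; rewrite /letA => /and3P [tA _ _] nl vl'.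
  have actA' : a * c * t \in A by rewrite groupM.
  rewrite ev_normA // /ev /= iAM // iAM // ?cA //.
  by rewrite -!(gX_assoc gX).
- by move=> _; rewrite ev_normA // /ev /= iAM // ?cA // -(gX_assoc gX).
Qed.
Lemma ev_actB b w : b \in B -> valid w -> ev (actB b w) = mulX (iB b) (ev w).
Proof.
case: w => c l bB /andP [/= cC vlw]; rewrite /actB /=.
have bcB : b * phi c \in B by rewrite groupM // pB.
rewrite {2}/ev /= iAB //.
case: l vlw => [|x l'] /=; last case: x => [t|s] /=.
- by move=> _; rewrite ev_normB // iBM // ?pB // -(gX_assoc gX).
- by move=> _; rewrite ev_normB // iBM // ?pB // -(gX_assoc gX).
- case/and3P; rewrite /letB => /and3P [sB _ _] nl vl'.
  have bcs : b * phi c * s \in B by rewrite groupM.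
  rewrite ev_normB // iBM // iBM // ?pB //.
  by rewrite -!(gX_assoc gX).
Qed.

Definition Sgen (y : X) := ev (val (tho y)) = y.
Lemma Sgen1 : Sgen oneX.
Proof. by rewrite /Sgen tho1 /ev /= iA1 (gX_1l gX). Qed.
Lemma SgenA a y : a \in A -> Sgen y -> Sgen (mulX (iA a) y).
Proof. by move=> aA Sy; rewrite /Sgen thoA // ev_actA ?Sy // (valP (tho y)). Qed.
Lemma SgenB b y : b \in B -> Sgen y -> Sgen (mulX (iB b) y).
Proof. by move=> bB Sy; rewrite /Sgen thoB // ev_actB ?Sy // (valP (tho y)). Qed.
Lemma SgenA' a y : a \in A -> Sgen (mulX (iA a) y) -> Sgen y.
Proof.
move=> aA S1; have := SgenA (groupVr aA) S1.
by rewrite iAV // (gX_mulKV gX).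
Qed.
Lemma SgenB' a y : a \in B -> Sgen (mulX (iB a) y) -> Sgen y.
Proof.
move=> aA S1; have := SgenB (groupVr aA) S1.
by rewrite iBV // (gX_mulKV gX).
Qed.

Definition sb (y : X) : bool := if excluded_middle_informative (Sgen y) then true else false.
Lemma sbP y : sb y = true <-> Sgen y.
Proof. by rewrite /sb; case: excluded_middle_informative. Qed.
Lemma sbA a y : a \in A -> sb (mulX (iA a) y) = sb y.
Proof.
move=> aA; rewrite /sb.
case: excluded_middle_informative => H1; case: excluded_middle_informative => H2 //.
  by case: H2; exact: SgenA' aA H1.
by case: H1; exact: SgenA.
Qed.
Lemma sbB a y : a \in B -> sb (mulX (iB a) y) = sb y.
Proof.
move=> aA; rewrite /sb.
case: excluded_middle_informative => H1; case: excluded_middle_informative => H2 //.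
  by case: H2; exact: SgenB' aA H1.
by case: H1; exact: SgenB.
Qed.

Definition T2 := (X * bool)%type.
Definition Lp (x : X) : pperm T2.
refine (@PPerm T2 (fun p => (mulX x p.1, p.2)) (fun p => (mulX (invX x) p.1, p.2)) _ _).
- by case=> y b /=; rewrite (gX_mulK gX).
- by case=> y b /=; rewrite (gX_mulKV gX).
Defined.
Definition tauf (p : T2) : T2 := (p.1, addb p.2 (~~ sb p.1)).
Arguments tauf : simpl never.
Lemma taufK p : tauf (tauf p) = p.
Proof. by case: p => y b; rewrite /tauf /= -addbA addbb addbF. Qed.
Definition tau : pperm T2 := PPerm taufK taufK.
Definition Lp2 (x : X) : pperm T2 := pmul tau (pmul (Lp x) tau).

Lemma LpM x y : Lp (mulX x y) = pmul (Lp x) (Lp y).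
Proof. by apply: pperm_ext => [[z b]] /=; rewrite (gX_assoc gX). Qed.
Lemma Lp2M x y : Lp2 (mulX x y) = pmul (Lp2 x) (Lp2 y).
Proof.
apply: pperm_ext => p /=.
by rewrite -addbA addbb addbF (gX_assoc gX).
Qed.

Lemma gen_all x : Sgen x.
Proof.
case: am => _ [] _ [] _ [] _ [] _ [] _ U.
pose gA' := fun a => Lp (iA a); pose gB' := fun b => Lp (iB b).
have hA : hom_on A (@pmul T2) gA' by move=> a b aA bA; rewrite /gA' iAM // LpM.
have hB : hom_on B (@pmul T2) gB' by move=> a b aA bA; rewrite /gB' iBM // LpM.
have hC : forall c, c \in C -> gA' c = gB' (phi c) by move=> c cC; rewrite /gA' /gB' iAB.
have [f [_ _ _ Uq]] := U _ _ _ _ (@pperm_group T2) gA' gB' hA hB hC.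
have E1 := Uq Lp LpM (fun a _ => erefl) (fun b _ => erefl).
have E2 : forall x, Lp2 x = f x.
  apply: Uq; first exact: Lp2M.
    move=> a aA; apply: pperm_ext => [[y b]].
    by rewrite /= /tauf /= sbA // -addbA addbb addbF.
  move=> a aA; apply: pperm_ext => [[y b]].
  by rewrite /= /tauf /= sbB // -addbA addbb addbF.
have := congr1 (fun u => pf u (oneX, false)) (etrans (E1 x) (esym (E2 x))).
rewrite /= /tauf /=.
have -> : sb oneX = true by apply/sbP; exact: Sgen1.
rewrite /= (gX_1r gX) => [[]].
by case: (sb x) (sbP x) => // H _; apply H.
Qed.

Definition startsB (l : seq (gA + gB)) := if l is inr _ :: _ then true else false.

Lemma valid_tho x : valid (val (tho x)). Proof. exact: valP. Qed.

Lemma res_lemma g : g \in A -> forall l, vl l ->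
  (notB l -> notB (val (tho (mulX (evl l) (iA g)))).2) /\
  (startsB l -> startsB (val (tho (mulX (evl l) (iA g)))).2).
Proof.
move=> gA0; elim=> [|[t|s] l IH]; rewrite [vl _]/=.
- split=> // _; rewrite (gX_1l gX) -[iA g](gX_1r gX) thoA // tho1 /= /actA /=.
  by rewrite /normA; case: ifP.
- case/and3P; rewrite /letA => /and3P [tA tC _] nl vl'; split=> // _.
  rewrite -(gX_assoc gX) thoA //.
  case: l nl vl' IH => [|[u|u] l] // _ vl' IH.
    rewrite /evl (gX_1l gX) -[iA g](gX_1r gX) thoA // tho1 /= /actA /=.
    rewrite /normA; case: ifP => _ /=; first by case: ifP.
    by case: ifP.
  have [_ /(_ erefl)] := IH vl'.
  case: (val (tho _)) (valid_tho (mulX (mulX (iB u) (evl l)) (iA g))) => c2 l2 /andP [/= c2C _].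
  case: l2 => [|[v|v] l2] //= _.
  rewrite /actA /= /normA; case: ifP => //= tcC.
  by case/negP: tC; rewrite -(mulgK c2 t) groupM ?groupV.
- case/and3P; rewrite /letB => /and3P [sB sD _] nl vl'; split=> // _.
  rewrite -(gX_assoc gX) thoB //.
  have [/(_ nl) H _] := IH vl'.
  case: (val (tho _)) (valid_tho (mulX (evl l) (iA g))) H => c2 l2 /andP [/= c2C _] H.
  have -> : actB s (c2, l2) = normB (s * phi c2) l2 by case: l2 H => [|[v|v] l2].
  rewrite /normB; case: ifP => //= scD.
  by case/negP: sD; rewrite -(mulgK (phi c2) s) groupM ?groupV ?phiD.
Qed.

Lemma evl_cons_inl t l : evl (inl t :: l) = mulX (iA t) (evl l). Proof. by []. Qed.
Lemma evl_cons_inr t l : evl (inr t :: l) = mulX (iB t) (evl l). Proof. by []. Qed.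

Lemma decomp x : ~ (exists a0, a0 \in A /\ iA a0 = x) ->
  exists a0 s l, [/\ a0 \in A, vl (inr s :: l) & x = mulX (iA a0) (evl (inr s :: l))].
Proof.
move=> nx; have Ex := gen_all x; rewrite /Sgen in Ex.
case: (val (tho x)) (valid_tho x) Ex => c l /andP [/= cC vlw]; rewrite /ev /= => Ex.
case: l vlw Ex => [|[t|s] l].
- move=> _ Ex; case: nx; exists c; split; first exact: cA.
  by rewrite -Ex /= (gX_1r gX).
- rewrite [vl _]/=; case/and3P; rewrite /letA => /and3P [tA tC _] nl vl' Ex.
  case: l nl vl' Ex => [|[u|u] l] // _ vl' Ex.
    case: nx; exists (c * t); split; first by apply: groupM => //; apply: cA.
    by rewrite (iAM (cA cC) tA) -Ex /= (gX_1r gX).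
  exists (c * t), u, l; split => //; first by apply: groupM => //; apply: cA.
  by rewrite -Ex (iAM (cA cC) tA) evl_cons_inl (gX_assoc gX).
- move=> vlw Ex; exists c, s, l; split => //; exact: cA.
Qed.

Lemma GL k :
  (forall u s, u \in C -> s \in B -> #[u] = k -> phi u ^ s \in D -> s \in D) ->
  forall x, ~ (exists a0, a0 \in A /\ iA a0 = x) ->
  forall a b, a \in A -> b \in A -> #[b] = k ->
  mulX (iA b) x = mulX x (iA a) -> False.
Proof.
move=> M x nx a b aA bA ob E.
have [a0 [s [l [a0A vl1 Ex]]]] := decomp nx.
set r := evl (inr s :: l) in Ex.
set b' := b ^ a0.
have b'A : b' \in A by rewrite groupJ.
have E2 : mulX (iA b') r = mulX r (iA a).
  have a0V : a0^-1 \in A by rewrite groupV.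
  rewrite /b' /conjg (iAM a0V (groupM bA a0A)) (iAM bA a0A) iAV //.
  rewrite -(gX_assoc gX) -(gX_assoc gX) -Ex E Ex -(gX_assoc gX) (gX_mulKV gX) //.
have := congr1 (fun z => val (tho z)) E2 => /=.
rewrite thoA // tho_evl // /r evl_cons_inr -(gX_assoc gX) thoB; last first.
  by move: vl1; rewrite [vl _]/= /letB => /and3P [/and3P [] ].
move: vl1; rewrite [vl _]/= /letB => /and3P [/and3P [sB sD /eqP rs] nl vl'].
have [/(_ nl) H _] := res_lemma aA vl'.
case: (val (tho _)) (valid_tho (mulX (evl l) (iA a))) H => c2 l2 /andP [/= c2C _] H.
have -> : actB s (c2, l2) = normB (s * phi c2) l2 by case: l2 H => [|[v|v] l2].
rewrite /actA /= mulg1 /normA /normB.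
have scD : (s * phi c2 \in D) = false.
  apply/negbTE; apply: contra sD => H1.
  by rewrite -(mulgK (phi c2) s) groupM ?groupV ?phiD.
rewrite scD; case: ifP => // b'C [Eb Es _].
have zD := repr_mulV D (s * phi c2).
have Ep : phi b' = s * phi c2 * s^-1.
  by rewrite Eb invmK //; congr (_ * _^-1); exact: (esym Es).
case/negP: sD; apply: (M b' s) => //; first by rewrite /b' orderJ.
by rewrite Ep /conjg mulgKV mulKg phiD.
Qed.

End Amalg.

Lemma GLfin (gA gB : finGroupType) (A : {group gA}) (B : {group gB})
  (C : {group gA}) (phi : {morphism C >-> gB}) (injphi : 'injm phi)
  (sCA : C \subset A) (sDB : phi @* C \subset B)
  (X : Type) (mulX : X -> X -> X) (invX : X -> X) (oneX : X)
  (iA : gA -> X) (iB : gB -> X) :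
  is_amalgam A B C phi mulX invX oneX iA iB -> forall k,
  (forall u s, u \in C -> s \in B -> #[u] = k -> phi u ^ s \in phi @* C -> s \in phi @* C) ->
  forall x, ~ (exists a0, a0 \in A /\ iA a0 = x) ->
  forall a b, a \in A -> b \in A -> #[b] = k ->
  mulX (iA b) x = mulX x (iA a) -> False.
Proof.
move=> am k M x nx a b aA bA ob E.
have [f [H1 [H2 H3]]] := exists_theta injphi sCA sDB am.
exact: (GL am H1 H2 H3 M nx aA bA ob E).
Qed.

Lemma amalgam_swap (gA gB : finGroupType) (A : {group gA}) (B : {group gB})
  (C : {group gA}) (phi : {morphism C >-> gB}) (injphi : 'injm phi)
  (X : Type) (mulX : X -> X -> X) (invX : X -> X) (oneX : X)
  (iA : gA -> X) (iB : gB -> X) :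
  is_amalgam A B C phi mulX invX oneX iA iB ->
  is_amalgam B A (phi @* C)%G (invm injphi) mulX invX oneX iB iA.
Proof.
case=> gX [hA [hB [jA [jB [cAB U]]]]].
split=> //; split=> //; split=> //; split=> //; split=> //; split.
  move=> y /morphimP [c cD cC ->]; rewrite invmE //; exact: (esym (cAB c cC)).
move=> G mulG invG oneG gG fB fA hfB hfA cBA.
have cAB' : forall c, c \in C -> fA c = fB (phi c).
  by move=> c cC; rewrite cBA ?mem_morphim // invmE.
have [f [fM fA' fB' fU]] := U G mulG invG oneG gG fA fB hfA hfB cAB'.
exists f; split=> // g gM g1 g2; exact: fU.
Qed.

Lemma arith_eE c n : (c < n -> 2 * n + 1 = c.*2.+1 + 2 * (n - c))%N.
Proof. move=> h; lia. Qed.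
Lemma arith_kn c n : (0 < c -> c < n -> n - c < n)%N.
Proof. move=> h1 h2; lia. Qed.

Section GT.
Variables (gT : finGroupType) (r s0 n : nat) (G Q : {group gT}) (alpha : gT).
Hypotheses (pr : prime r) (ps : prime s0) (rs : r != s0)
  (ext : ext_semidirect r s0 n G Q alpha) (lsi : least_sp_index s0 r n).

Let Al := <[alpha]>%G.

Lemma ext_parts : [/\ extraspecial Q, #|Q| = (r ^ (2 * n + 1))%N, exponent Q = r,
      #[alpha] = s0 & Q ><| Al = G /\ alpha \in 'C('Z(Q))].
Proof. by case: ext => [? [? [? [? [? [? _]]]]]]. Qed.
Lemma faithful_a : forall y, y \in Al -> (forall x, x \in Q -> [~ x, y] \in 'Z(Q)) -> y = 1.
Proof. by case: ext => [? [? [? [? [? [? H]]]]]]. Qed.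

Lemma pQ : r.-group Q.
Proof. by case: ext_parts => _ cQ _ _ _; rewrite /pgroup cQ pnatX pnat_id. Qed.
Lemma cardAl : #|Al| = s0.
Proof. by case: ext_parts => _ _ _ oa _; rewrite -orderE. Qed.
Lemma coQA : coprime #|Q| #|Al|.
Proof.
case: ext_parts => _ cQ _ _ _; rewrite cQ cardAl coprimeXl //.
by rewrite prime_coprime // dvdn_prime2.
Qed.
Lemma nQA : Al \subset 'N(Q).
Proof. by case: ext_parts => _ _ _ _ [/sdprodP [_ _ H _] _]. Qed.
Lemma ZK : 'Z(Q) \subset 'C_Q(Al).
Proof.
case: ext_parts => _ _ _ _ [_ aZ].
by rewrite subsetI center_sub centsC cycle_subG.
Qed.


Lemma centQ : 'C_Q(Al) = 'Z(Q).
Proof.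
apply/eqP; rewrite eqEsubset ZK andbT; apply/negPn/negP => nKZ.
case: ext_parts => esQ cQ eQ oa [sd aZ].
set K := 'C_Q(Al)%G.
have sKQ : K \subset Q by rewrite subsetIl.
have cKA : K \subset 'C(Al) by rewrite subsetIr.
have derQ : Q^`(1) = 'Z(Q) by case: esQ => [[]].
have PhiQ : 'Phi(Q) = 'Z(Q) by case: esQ => [[]].
have pZ : prime #|'Z(Q)| by case: esQ.
pose D := [~: Q, Al]%G.
have sDQ : D \subset Q by rewrite commg_subl nQA.
have nDA : Al \subset 'N(D) by apply: commg_normr.
have cDK : [~: D, K] = 1.
  apply: three_subgroup.
    have -> : [~: Al, K] = 1 by apply/commG1P; rewrite centsC.
    exact: comm1G.
  apply/commG1P; rewrite commGC; apply: subset_trans (commgS Q sKQ) _.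
  by rewrite -derg1 derQ centsC cycle_subG.
have pK : r.-group K := pgroupS sKQ pQ.
have sQDK : Q \subset D * K.
  rewrite -quotientSK ?commg_norml //.
  have E := coprime_quotient_cent sDQ nDA coQA (pgroup_sol pQ).
  rewrite -/K in E; rewrite E subsetI subxx.
  exact: quotient_cents2r.
have ZKe : 'Z(K) = 'Z(Q).
  apply/eqP; rewrite eqEsubset; apply/andP; split.
    rewrite subsetI (subset_trans (center_sub K) sKQ) centsC.
    apply: subset_trans sQDK _; rewrite mulG_subG; apply/andP; split.
      rewrite centsC; apply: subset_trans (center_sub K) _.
      by rewrite centsC; apply/commG1P.
    by rewrite centsC subsetIr.
  rewrite subsetI ZK /=; apply: subset_trans (subsetIr Q 'C(Q)) _.
  exact: centS.
have nab : ~~ abelian K.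
  apply/negP => abK; case/negP: nKZ; rewrite -ZKe subsetI subxx //.
have dK : K^`(1) = 'Z(Q).
  apply/eqP; rewrite eqEcard; have sdK : K^`(1) \subset 'Z(Q).
    by rewrite -derQ; apply: dergS.
  rewrite sdK /=.
  have nt : K^`(1) != 1 by apply/eqP => /derG1P; apply/negP.
  have nt1 : (#|K^`(1)| != 1)%N by rewrite -cardG_gt1 in nt; rewrite neq_ltn nt orbT.
  by rewrite ((prime_nt_dvdP pZ nt1) (cardSg sdK)).
have PhiK : 'Phi(K) = 'Z(Q).
  apply/eqP; rewrite eqEsubset -{1}PhiQ (PhiS pQ sKQ) /= -dK.
  by rewrite (Phi_joing pK) joing_subl.
have esK : extraspecial K by split; [split; rewrite ZKe | rewrite ZKe].
have [c c0 cK] := card_extraspecial pK esK.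
have modQK : #|Q| = #|K| %[mod s0].
  have := pgroup_fix_mod (to := 'J) (G := Al) (S := Q).
  have pA : s0.-group Al by rewrite /pgroup cardAl pnat_id.
  have acts : [acts Al, on Q | 'J] by rewrite astabsJ nQA.
  by have := pgroup_fix_mod pA acts; rewrite afixJ.
have pKQ : K \proper Q.
  rewrite properEneq sKQ andbT; apply/negP => /eqP EKQ.
  have a1 : alpha = 1.
    apply: faithful_a; first exact: cycle_id.
    move=> x xQ; have : x \in K by rewrite EKQ.
    rewrite inE => /andP [_ /centP /(_ alpha (cycle_id _)) cxa].
    by have /eqP -> : [~ x, alpha] == 1 by apply/commgP.
  by move: ps; rewrite -oa a1 order1.
have ltcn : c < n.
  have := proper_card pKQ; rewrite cK cQ ltn_exp2l ?prime_gt1 //.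
  by rewrite addn1 ltnS mul2n ltn_double.
set k := (n - c)%N.
have k0 : (0 < k)%N by rewrite subn_gt0.
have kn : (k < n)%N by apply: arith_kn.
have eE : (2 * n + 1 = c.*2.+1 + 2 * k)%N by apply: arith_eE.
rewrite cQ cK eE expnD in modQK.
have r0 : (0 < r ^ c.*2.+1)%N by rewrite expn_gt0 prime_gt0.
have : (s0 %| r ^ (2 * k) - 1)%N.
  move/eqP: modQK; rewrite eqn_mod_dvd ?leq_pmulr ?expn_gt0 ?prime_gt0 //.
  rewrite -{2}(muln1 (r ^ c.*2.+1)%N) -mulnBr Gauss_dvdr //.
  by rewrite coprime_sym coprimeXl // prime_coprime // dvdn_prime2 // eq_sym.
move=> dk; case: lsi => _ [_ /(_ k k0 kn)]; apply/negP; apply/negPn.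
by rewrite /sp_order big_nat_recr //= dvdn_mull // dvdn_mull.
Qed.

Lemma CCE : 'Z(Q) <*> Al = 'Z(Q) * Al.
Proof.
case: ext_parts => _ _ _ _ [_ aZ].
by rewrite cent_joinEr // cycle_subG.
Qed.

Lemma inAl w : w \in 'Z(Q) <*> Al -> #[w] = s0 -> w \in Al.
Proof.
case: ext_parts => _ _ eQ _ [_ aZ].
rewrite CCE => /mulsgP [z y zZ yA ->] ow.
have cy : commute z y.
  have : y \in 'C('Z(Q)) by apply: (subsetP _ y yA); rewrite cycle_subG.
  by move/centP => /(_ z zZ).
have zs : z ^+ s0 = 1.
  have := expg_order (z * y); rewrite ow expgMn // -cardAl (expg_cardG yA) mulg1.
  done.
have zr : z ^+ r = 1 by rewrite -eQ expg_exponent // (subsetP (center_sub Q)).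
have : #[z] %| gcdn s0 r by rewrite dvdn_gcd !order_dvdn zs zr !eqxx.
rewrite (eqnP (_ : coprime s0 r)); last by rewrite prime_coprime // dvdn_prime2 // eq_sym.
rewrite dvdn1 order_eq1 => /eqP ->; by rewrite mul1g.
Qed.

Lemma GTmal v g : v \in 'Z(Q) <*> Al -> #[v] = s0 -> g \in G ->
  v ^ g \in 'Z(Q) <*> Al -> g \in 'Z(Q) <*> Al.
Proof.
move=> vC ov gG vgC.
case: ext_parts => _ _ _ oa [sd aZ].
have [_ QA _ _] := sdprodP sd.
have vA := inAl vC ov.
have vgA := inAl vgC (etrans (orderJ v g) ov).
have Ev : <[v]> = Al.
  apply/eqP; rewrite eqEcard cycle_subG vA /= cardAl -orderE ov leqnn //.
have gN : g \in 'N(Al).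
  rewrite -Ev; apply/normP; rewrite -cycleJ.
  apply/eqP; rewrite eqEcard -!orderE orderJ leqnn andbT cycle_subG.
  by move: vgA; rewrite -Ev.
move: gG; rewrite -QA => /mulsgP [y a yQ aA Eg].
have yN : y \in 'N_Q(Al).
  rewrite inE yQ /= (_ : y = g * a^-1); last by rewrite Eg mulgK.
  apply: groupM gN _; rewrite groupV.
  exact: (subsetP (normG Al)).
rewrite (coprime_norm_cent nQA coQA) centQ in yN.
by rewrite Eg CCE mem_mulg.
Qed.

End GT.

Lemma order_transfer (gA : finGroupType) (A : {group gA})
  (X : Type) (mulX : X -> X -> X) (invX : X -> X) (oneX : X) (iA : gA -> X) :
  is_group mulX invX oneX -> hom_on A mulX iA -> {in A &, injective iA} ->
  forall a b x, a \in A -> b \in A -> mulX (iA b) x = mulX x (iA a) -> #[b] = #[a].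
Proof.
move=> gX hA jA a b x aA bA E.
have i1 : iA 1 = oneX by apply: (gX_idem gX); rewrite -hA ?mulg1.
have Ek : forall k, mulX (iA (b ^+ k)) x = mulX x (iA (a ^+ k)).
  elim=> [|k IH]; first by rewrite !expg0 i1 (gX_1l gX) (gX_1r gX).
  rewrite !expgS hA ?groupX // hA ?groupX // -(gX_assoc gX) IH (gX_assoc gX) E.
  by rewrite (gX_assoc gX).
have H1 : forall k, (a ^+ k == 1) = (b ^+ k == 1).
  move=> k; apply/eqP/eqP => H.
    apply: jA; rewrite ?groupX //; apply: (gX_cancel_r gX (x := x)).
    by rewrite Ek H i1 (gX_1l gX) (gX_1r gX).
  apply: jA; rewrite ?groupX //; apply: (gX_cancel_l gX (x := x)).
  by rewrite -Ek H i1 (gX_1l gX) (gX_1r gX).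
apply/eqP; rewrite eqn_dvd !order_dvdn -H1 expg_order H1 expg_order.
by rewrite !eqxx.
Qed.

Unset Implicit Arguments.
Theorem mainTheorem6
  (p q m n : nat)
  (gA gB : finGroupType)
  (A Q : {group gA}) (alpha : gA)
  (B P : {group gB}) (beta : gB)
  (phi : {morphism ('Z(Q) <*> <[alpha]>)%G >-> gB})
  (X : Type) (mulX : X -> X -> X) (invX : X -> X) (oneX : X)
  (iA : gA -> X) (iB : gB -> X) :
  prime p -> prime q -> odd p -> odd q -> p != q ->
  least_sp_index p q m ->
  least_sp_index q p n ->
  ext_semidirect q p m A Q alpha ->
  ext_semidirect p q n B P beta ->
  isom ('Z(Q) <*> <[alpha]>) ('Z(P) <*> <[beta]>) phi ->
  is_amalgam A B ('Z(Q) <*> <[alpha]>)%G phi mulX invX oneX iA iB ->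
  (forall x : X, ~ (exists a, a \in A /\ iA a = x) ->
     forall H : {group gA},
       (forall a, a \in H <->
          (a \in A /\ exists b, b \in A /\
             iA a = mulX (invX x) (mulX (iA b) x))) ->
       ~~ (q %| #|H|)%N) /\
  (forall y : X, ~ (exists b, b \in B /\ iB b = y) ->
     forall H : {group gB},
       (forall b, b \in H <->
          (b \in B /\ exists c, c \in B /\
             iB b = mulX (invX y) (mulX (iB c) y))) ->
       ~~ (p %| #|H|)%N).
Proof.
move=> pp pq _ _ npq lsm lsn extA extB iso am.
have [injphi phiCA] := isomP iso.
have [_ _ _ _ [sdA _]] := ext_parts extA.
have [_ _ _ _ [sdB _]] := ext_parts extB.
have [_ QA _ _] := sdprodP sdA.
have [_ PB _ _] := sdprodP sdB.
have sQA : Q \subset A by rewrite -QA mulG_subl.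
have sAlA : <[alpha]> \subset A by rewrite -QA mulG_subr.
have sPB : P \subset B by rewrite -PB mulG_subl.
have sBeB : <[beta]> \subset B by rewrite -PB mulG_subr.
have sCA : ('Z(Q) <*> <[alpha]>)%G \subset A.
  by rewrite /= join_subG (subset_trans (center_sub Q)).
have sDB : phi @* ('Z(Q) <*> <[alpha]>)%G \subset B.
  by rewrite phiCA /= join_subG (subset_trans (center_sub P)).
have [gX [hA [hB [jA [jB _]]]]] := am.
split.
- move=> x nx H Hc; apply/negP => /(Cauchy pq) [a aH oa].
  have [aA [b [bA Eb]]] := (Hc a).1 aH.
  have E : mulX (iA b) x = mulX x (iA a) by rewrite Eb (gX_mulK gX).
  have ob : #[b] = q by rewrite (order_transfer gX hA jA aA bA E).
  apply: (GLfin injphi sCA sDB am (k := q) _ nx aA bA ob E).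
  move=> u s uC sB ou; rewrite phiCA => H1.
  have vC : phi u \in ('Z(P) <*> <[beta]>) by rewrite -phiCA mem_morphim.
  have ov : #[phi u] = q by rewrite order_injm.
  exact: (GTmal pp pq npq extB lsn vC ov sB H1).
- move=> y ny H Hc; apply/negP => /(Cauchy pp) [a aH oa].
  have [aA [b [bA Eb]]] := (Hc a).1 aH.
  have E : mulX (iB b) y = mulX y (iB a) by rewrite Eb (gX_mulK gX).
  have ob : #[b] = p by rewrite (order_transfer gX hB jB aA bA E).
  have am' := amalgam_swap injphi am.
  have sDB' : invm injphi @* (phi @* ('Z(Q) <*> <[alpha]>)%G)%G \subset A.
    by rewrite morphim_invm.
  apply: (GLfin (injm_invm injphi) sDB sDB' am' (k := p) _ ny aA bA ob E).
  move=> u s uC sA ou; rewrite morphim_invm // => H1.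
  have vC : invm injphi u \in ('Z(Q) <*> <[alpha]>).
    by case/morphimP: uC => c _ cC ->; rewrite invmE.
  have ov : #[invm injphi u] = p by rewrite order_injm // injm_invm.
  apply: (GTmal pq pp _ extA lsm vC ov sA H1).
  by rewrite eq_sym.
Qed.
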